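(* Let $\mathcal B=(B_1,\dots,B_d)$ be a splitting of order $d$ of $B_J\in\mathbb R^{n\times n}$. Then: if $\|B_J\|_\infty\le1$, then $\|T(\mathcal B)\|_\infty=\|B_J\|_\infty$; if $\|B_J\|_\infty>1$, then $\|B_J\|_\infty\le\|T(\mathcal B)\|_\infty\le\|B_J\|_\infty^d$.
   Context: For $B\in\mathbb R^{n\times n}$, a splitting of $B$ of order $d\ge1$ is an ordered $d$-tuple $\mathcal B=(B_1,\dots,B_d)$ of real $n\times n$ matrices with $B_p\neq O$ for all $p$, $\sum_{p=1}^d B_p=B$, and $B_p\circ B_q=O$ (Hadamard product) for $p\ne q$. The iteration matrix of $\mathcal B$ is the $dn\times dn$ matrix $T(\mathcal B)=(I_{dn}-\mathcal L)^{-1}\mathcal U$, where $\mathcal L,\mathcal U$ are $d\times d$ block matrices with $n\times n$ blocks, $\mathcal L_{ij}=B_j$ if $i>j$ and $O$ otherwise, $\mathcal U_{ij}=B_j$ if $i\le j$ and $O$ otherwise. $\|\cdot\|_\infty$ is the maximum-row-sum matrix norm. *)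

(* Defs.v *)
From HB Require Import structures.
From mathcomp Require Import all_boot all_order all_algebra.
Set Implicit Arguments. Unset Strict Implicit. Unset Printing Implicit Defensive.
Import Order.TTheory GRing.Theory Num.Theory.
Local Open Scope ring_scope.

Lemma blk_proof d n (k : 'I_(d * n)) : (k %/ n < d)%N.
Proof.
case: n k => [|n] k; first by case: k => m; rewrite muln0.
by rewrite ltn_divLR // ltn_ord.
Qed.

Lemma off_proof d n (k : 'I_(d * n)) : (k %% n < n)%N.
Proof.
case: n k => [|n] k; first by case: k => m; rewrite muln0.
by rewrite ltn_pmod.
Qed.

Definition blk d n (k : 'I_(d * n)) : 'I_d := Ordinal (blk_proof k).
Definition off d n (k : 'I_(d * n)) : 'I_n := Ordinal (off_proof k).

Definition is_splitting (R : ringType) (n d : nat) (B : 'I_d -> 'M[R]_n)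
    (BJ : 'M[R]_n) : Prop :=
  (0 < d)%N /\
  (forall p, B p != 0) /\
  \sum_(p < d) B p = BJ /\
  (forall p q : 'I_d, p != q -> forall i j, B p i j * B q i j = 0).

Definition blockL (R : ringType) (n d : nat) (B : 'I_d -> 'M[R]_n) : 'M[R]_(d * n) :=
  \matrix_(i, j) if (blk j < blk i)%N then B (blk j) (off i) (off j) else 0.

Definition blockU (R : ringType) (n d : nat) (B : 'I_d -> 'M[R]_n) : 'M[R]_(d * n) :=
  \matrix_(i, j) if (blk i <= blk j)%N then B (blk j) (off i) (off j) else 0.

Definition iterT (R : comUnitRingType) (n d : nat) (B : 'I_d -> 'M[R]_n) : 'M[R]_(d * n) :=
  invmx (1%:M - blockL B) *m blockU B.

Definition norm_inf (R : numDomainType) (m : nat) (A : 'M[R]_m) : R :=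
  \big[Num.max/0]_(i < m) \sum_(j < m) `|A i j|.

(* Main.v *)
Require Import Defs.
From mathcomp Require Import all_boot all_order all_algebra.
Import Order.TTheory GRing.Theory Num.Theory.
Local Open Scope ring_scope.
Set Implicit Arguments. Unset Strict Implicit.

Section Aux.
Variables (R : realFieldType) (n d : nat).

Lemma idx_proof (p : 'I_d) (c : 'I_n) : (p * n + c < d * n)%N.
Proof.
have hp := ltn_ord p; have hc := ltn_ord c.
apply: (@leq_trans (p * n + n)); first by rewrite ltn_add2l.
by rewrite -mulSnr leq_mul2r hp orbT.
Qed.

Definition idx (p : 'I_d) (c : 'I_n) : 'I_(d * n) := Ordinal (idx_proof p c).

Lemma blk_idx p c : blk (idx p c) = p.
Proof. apply: val_inj => /=; rewrite divnMDl ?divn_small ?addn0 //; by case: c => c /= h; rewrite (leq_ltn_trans _ h). Qed.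

Lemma off_idx p c : off (idx p c) = c.
Proof. apply: val_inj => /=; by rewrite modnMDl modn_small. Qed.

Lemma idx_blk k : idx (blk k) (off k) = k.
Proof. apply: val_inj => /=; by rewrite -divn_eq. Qed.

Lemma sum_idx (F : 'I_(d * n) -> R) :
  \sum_(k < d * n) F k = \sum_(p < d) \sum_(c < n) F (idx p c).
Proof.
rewrite pair_big /=.
rewrite (reindex (fun pc : 'I_d * 'I_n => idx pc.1 pc.2)) //=.
exists (fun k => (blk k, off k)) => [[p c] _|k _] /=.
  by rewrite blk_idx off_idx.
by rewrite idx_blk.
Qed.

End Aux.

Section Aux2.
Variables (R : realFieldType) (n d : nat) (B : 'I_d -> 'M[R]_n).

Lemma blockL_pow k (i j : 'I_(d * n)) :
  (blk i < blk j + k)%N -> ((blockL B) ^+ k) i j = 0.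
Proof.
elim: k i j => [|k IH] i j h.
  rewrite expr0 mxE; case: eqP => // eij; subst; by rewrite addn0 ltnn in h.
rewrite exprSr mxE big1 // => m _; rewrite mxE.
case: ltnP => hm; last by rewrite mulr0.
rewrite IH ?mul0r //; apply: (leq_trans h); by rewrite -addSnnS leq_add2r.
Qed.

Lemma blockL_nil : (blockL B) ^+ d = 0.
Proof.
apply/matrixP => i j; rewrite mxE blockL_pow //.
by apply: (leq_trans (ltn_ord (blk i))); rewrite leq_addl.
Qed.

Lemma unit_IL : (1%:M - blockL B) \in unitmx.
Proof.
have := @mulmx1_unit R _ (1%:M - blockL B) (\sum_(i < d) (blockL B) ^+ i).
case=> //.
have := subrX1 (blockL B) d; rewrite blockL_nil sub0r => h.
have e : (1%:M - blockL B) = - (blockL B - 1) by rewrite opprB.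
rewrite e.
change (- (blockL B - 1) * \sum_(i < d) blockL B ^+ i = 1).
by rewrite mulNr -h opprK.
Qed.

Lemma iterT_eq : iterT B = blockU B + blockL B *m iterT B.
Proof.
have h : (1%:M - blockL B) *m iterT B = blockU B by rewrite /iterT mulKVmx // unit_IL.
move: h; set T := iterT B => h.
by rewrite -h mulmxBl mul1mx subrK.
Qed.

End Aux2.

Section Norm.
Variables (R : realFieldType) (m : nat).

Lemma maxE (x y : R) : Num.max x y = if x < y then y else x.
Proof. by []. Qed.

Lemma lemaxl (x y : R) : x <= Num.max x y.
Proof. rewrite maxE; case: ltrP => // h; exact: ltW. Qed.

Lemma lemaxr (x y : R) : y <= Num.max x y.
Proof. rewrite maxE; case: ltrP => //. Qed.

Lemma gemax (x y z : R) : x <= z -> y <= z -> Num.max x y <= z.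
Proof. by rewrite maxE; case: ltrP. Qed.

Lemma norm_ge0 (A : 'M[R]_m) : 0 <= norm_inf A.
Proof.
rewrite /norm_inf; elim/big_rec: _ => // i x _ hx.
exact: le_trans hx (lemaxr _ _).
Qed.

Lemma row_le (A : 'M[R]_m) i : \sum_j `|A i j| <= norm_inf A.
Proof.
rewrite /norm_inf [X in _ <= X](bigD1 i) //=; exact: lemaxl.
Qed.

Lemma norm_le (A : 'M[R]_m) M : 0 <= M -> (forall i, \sum_j `|A i j| <= M) ->
  norm_inf A <= M.
Proof.
move=> h0 h; rewrite /norm_inf; elim/big_rec: _ => // i x _ hx.
exact: gemax.
Qed.
End Norm.

Section Main.
Variables (R : realFieldType) (n d : nat) (B : 'I_d -> 'M[R]_n) (BJ : 'M[R]_n).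
Hypothesis hsum : \sum_(p < d) B p = BJ.
Hypothesis hdis : forall p q : 'I_d, p != q -> forall i j, B p i j * B q i j = 0.

Lemma abs_sum r c : \sum_p `|B p r c| = `|BJ r c|.
Proof.
rewrite -hsum summxE.
have [p0 hp0|hn] := pickP (fun p => B p r c != 0); last first.
  rewrite !big1 ?normr0 // => p _; have := hn p => /negbFE/eqP -> //; by rewrite normr0.
have oth : forall q, q != p0 -> B q r c = 0.
  move=> q hq; have := @hdis q p0 hq r c; move/eqP; rewrite mulf_eq0 (negbTE hp0) orbF.
  by move/eqP.
rewrite (bigD1 p0) //= [X in _ = `|X|](bigD1 p0) //= !big1 ?addr0 // => q hq.
  by rewrite oth // normr0.
Qed.

Let T := iterT B.
Let b := norm_inf BJ.

Lemma T_entry k l : T k l = blockU B k l + \sum_m blockL B k m * T m l.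
Proof. by rewrite {1}/T iterT_eq !mxE. Qed.

Lemma rs_bound0 k :
  \sum_l `|T k l| <= \sum_(p < d) \sum_(c < n) (`|blockU B k (idx p c)| + `|blockL B k (idx p c)| * \sum_l `|T (idx p c) l|).
Proof.
rewrite -(sum_idx (fun m => `|blockU B k m| + `|blockL B k m| * \sum_l `|T m l|)).
rewrite big_split /=.
under [X in _ <= _ + X]eq_bigr do rewrite mulr_sumr.
rewrite [X in _ <= _ + X]exchange_big -big_split /=.
apply: ler_sum => l _; rewrite T_entry.
apply: (le_trans (ler_normD _ _)); rewrite lerD2l.
apply: (le_trans (ler_norm_sum _ _ _)).
by apply: ler_sum => m _; rewrite normrM.
Qed.

Lemma rs_bound (c : R) : 1 <= c -> b <= c -> forall k,
  \sum_l `|T k l| <= c ^+ (blk k) * b.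
Proof.
move=> c1 bc.
have c0 : 0 <= c by apply: le_trans c1; exact: ler01.
suff H : forall N k, (blk k < N)%N -> \sum_l `|T k l| <= c ^+ (blk k) * b.
  by move=> k; apply: (H (blk k).+1).
elim=> [|N IH] k hk; first by [].
apply: (le_trans (rs_bound0 k)).
apply: (@le_trans _ _ (\sum_(p < d) \sum_(c0 < n) c ^+ blk k * `|B p (off k) c0|)).
  apply: ler_sum => p _; apply: ler_sum => c' _.
  rewrite !mxE blk_idx off_idx.
  case: leqP => hp.
    by rewrite normr0 mul0r addr0 ler_peMl // exprn_ege1.
  rewrite normr0 add0r mulrC.
  apply: ler_wpM2r => //.
  apply: (le_trans (IH _ _)); first by rewrite blk_idx; apply: leq_trans hp _.
  rewrite blk_idx.
  apply: (@le_trans _ _ (c ^+ p * c)); first by rewrite ler_wpM2l // exprn_ge0.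
  by rewrite -exprSr ler_weXn2l.
under eq_bigr do rewrite -mulr_sumr.
rewrite -mulr_sumr exchange_big /=.
under eq_bigr do rewrite abs_sum.
rewrite ler_wpM2l ?exprn_ge0 //.
exact: row_le.
Qed.

End Main.

Section Main2.
Variables (R : realFieldType) (n d : nat) (B : 'I_d -> 'M[R]_n) (BJ : 'M[R]_n).
Hypothesis dpos : (0 < d)%N.
Hypothesis hsum : \sum_(p < d) B p = BJ.
Hypothesis hdis : forall p q : 'I_d, p != q -> forall i j, B p i j * B q i j = 0.

Lemma lower : norm_inf BJ <= norm_inf (iterT B).
Proof.
apply: norm_le; first exact: norm_ge0.
move=> r.
pose p0 : 'I_d := Ordinal dpos.
apply: le_trans (row_le _ (idx p0 r)).
rewrite (sum_idx (fun l => `|iterT B (idx p0 r) l|)) exchange_big /=.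
apply: ler_sum => c _; rewrite -(abs_sum hsum hdis).
apply: ler_sum => p _.
rewrite T_entry big1 ?addr0.
  by rewrite !mxE !blk_idx !off_idx /=.
by move=> m _; rewrite !mxE blk_idx /= mul0r.
Qed.

Lemma upper (c : R) : 1 <= c -> norm_inf BJ <= c ->
  norm_inf (iterT B) <= c ^+ d.-1 * norm_inf BJ.
Proof.
move=> c1 bc; have b0 := norm_ge0 BJ.
apply: norm_le.
  by rewrite mulr_ge0 // exprn_ge0 // (le_trans ler01 c1).
move=> k; apply: le_trans (rs_bound hsum hdis c1 bc k) _.
rewrite ler_wpM2r // ler_weXn2l //.
by rewrite -ltnS prednK // ltn_ord.
Qed.
End Main2.

Theorem proposition4p1 (R : realFieldType) (n d : nat)
    (B : 'I_d -> 'M[R]_n) (BJ : 'M[R]_n) :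
  is_splitting B BJ ->
  (norm_inf BJ <= 1 -> norm_inf (iterT B) = norm_inf BJ) /\
  (1 < norm_inf BJ ->
     norm_inf BJ <= norm_inf (iterT B) /\ norm_inf (iterT B) <= norm_inf BJ ^+ d).
Proof.
case=> dpos [_ [hsum hdis]].
have lo := lower dpos hsum hdis.
split=> hb.
  apply/eqP; rewrite eq_le lo andbT.
  by have := upper dpos hsum hdis (lexx 1) hb; rewrite expr1n mul1r.
split=> //.
have := upper dpos hsum hdis (ltW hb) (lexx _).
by rewrite -exprSr prednK.
Qed.
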